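(* Let $q>1$ and let $\Pi,\Pi'\sim\mathrm{Mallows}(\mathbb{N},1/q)$ be independent. Define $T_1:=\inf\{j\ge1:\Pi([j])=\Pi'([j])=[j]\}$, where $[j]=\{1,\dots,j\}$. Then $\mathbb{E}\,T_1^2<\infty$.
   Context: For $0<p<1$, $\Pi\sim\mathrm{Mallows}(\mathbb{N},p)$ is the random injection $\mathbb{N}\to\mathbb{N}$ constructed as follows: let $Z_1,Z_2,\dots$ be i.i.d. geometric with $\mathbb{P}(Z_i=k)=(1-p)p^{k-1}$, $k\ge1$; set $\Pi(1)=Z_1$ and, for $i>1$, let $\Pi(i)$ be the $Z_i$-th smallest element of $\mathbb{N}\setminus\{\Pi(1),\dots,\Pi(i-1)\}$. *)

(* Defs.v *)
From mathcomp Require Import all_boot all_order all_algebra.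
From mathcomp Require Import all_classical all_reals all_analysis.
Set Implicit Arguments. Unset Strict Implicit. Unset Printing Implicit Defensive.
Import Order.TTheory GRing.Theory Num.Theory.
Local Open Scope classical_set_scope.
Local Open Scope ring_scope.

Definition geom_pmf (R : realType) (p : R) (k : nat) : R :=
  if k is k'.+1 then (1 - p) * p ^+ k' else 0.

(* The k-th smallest (k >= 1) element of {1,2,...} \ used.  It is at most
   k + size used, so it suffices to search in [1, k + size used]. *)
Definition kth_avail (used : seq nat) (k : nat) : nat :=
  nth 0%N [seq x <- iota 1 (k + size used) | x \notin used] k.-1.

(* Mallows construction.  The geometric variables are indexed from 0:
   Z i plays the role of Z_{i+1} in the paper.
   mallows_prefix Z n = [:: Pi(1); ...; Pi(n)]. *)
Fixpoint mallows_prefix (Z : nat -> nat) (n : nat) : seq nat :=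
  match n with
  | 0 => [::]
  | n'.+1 => let s := mallows_prefix Z n' in rcons s (kth_avail s (Z n'))
  end.

Definition mallows (Z : nat -> nat) (i : nat) : nat := last 0%N (mallows_prefix Z i).

Definition fixes_block (Z : nat -> nat) (j : nat) : bool :=
  all (fun x => x \in iota 1 j) (mallows_prefix Z j) &&
  all (fun x => x \in mallows_prefix Z j) (iota 1 j).

Definition joint_block (Z Z' : nat -> nat) : pred nat :=
  fun j => [&& (0 < j)%N, fixes_block Z j & fixes_block Z' j].

Definition first_joint_block (R : realType) (Z Z' : nat -> nat) : \bar R :=
  match pselect (exists j, joint_block Z Z' j) with
  | left h => ((ex_minn h)%:R)%:E
  | right _ => +oo%E
  end.

Definition mutually_independent (R : realType) (d : measure_display)
  (Omega : measurableType d) (P : probability Omega R) (I : eqType)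
  (X : I -> Omega -> nat) : Prop :=
  (forall i (B : set nat), measurable (X i @^-1` B)) /\
  (forall (F : seq I) (B : I -> set nat), uniq F ->
     P (\bigcap_(i in [set` F]) (X i @^-1` B i)) =
     (\prod_(i <- F) P (X i @^-1` B i))%E).

Definition join_family (Omega : Type) (Z Z' : nat -> Omega -> nat)
  : bool * nat -> Omega -> nat :=
  fun bi => if bi.1 then Z' bi.2 else Z bi.2.

(* Main.v *)
Require Import Defs.
From mathcomp Require Import all_boot all_order all_algebra.
From mathcomp Require Import all_classical all_reals all_analysis.
From mathcomp Require Import measurable_realfun.
From mathcomp Require Import zify ring lra.
Import Order.TTheory GRing.Theory Num.Theory.
Import numFieldNormedType.Exports.
Local Open Scope classical_set_scope.
Local Open Scope ring_scope.

Lemma size_mp (z : nat -> nat) n : size (mallows_prefix z n) = n.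
Proof. by elim: n => //= n IH; rewrite size_rcons IH. Qed.

Lemma kth_availP (used : seq nat) k : uniq used -> (0 < k)%N ->
  let r := kth_avail used k in
  (1 <= r <= k + size used)%N /\ r \notin used.
Proof.
move=> uu k0 /=; rewrite /kth_avail.
set l := [seq x <- _ | _].
have hs : (k.-1 < size l)%N.
  rewrite size_filter.
  have := count_predC (mem used) (iota 1 (k + size used)).
  rewrite size_iota.
  have : (count (mem used) (iota 1 (k + size used)) <= size used)%N.
    rewrite -size_filter; apply: uniq_leq_size.
      by apply: filter_uniq; apply: iota_uniq.
    by move=> x; rewrite mem_filter => /andP[].
  move: k0; set c1 := count _ _; set c2 := count _ _.
  have -> : c2 = count (fun x => x \notin used) (iota 1 (k + size used)) by [].
  lia.
have := mem_nth 0%N hs; rewrite mem_filter mem_iota => /andP[-> /andP[h1 h2]].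
by split=> //; rewrite h1 /= -ltnS -add1n.
Qed.

Lemma mp_inv (z : nat -> nat) j :
  (forall i, (i < j)%N -> (1 <= z i <= j - i)%N) ->
  forall m, (m <= j)%N -> uniq (mallows_prefix z m) /\
    all (fun x => x \in iota 1 j) (mallows_prefix z m).
Proof.
move=> hz; elim=> [|m IH] hm //=.
have [uu au] := IH (ltnW hm).
have /andP[z1 z2] := hz m hm.
have [/andP[r1 r2] rn] := @kth_availP _ (z m) uu z1.
rewrite rcons_uniq all_rcons rn uu au !andbT mem_iota r1 /=.
rewrite size_mp in r2; lia.
Qed.

Lemma SC (z : nat -> nat) j :
  (forall i, (i < j)%N -> (1 <= z i <= j - i)%N) -> fixes_block z j.
Proof.
move=> hz; have [uu au] := @mp_inv z j hz j (leqnn j).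
rewrite /fixes_block au /=.
have sub : {subset mallows_prefix z j <= iota 1 j} by move=> x h; exact: (allP au) x h.
have hsz : (size (iota 1 j) <= size (mallows_prefix z j))%N by rewrite size_iota size_mp.
have [_ e] := uniq_min_size uu sub hsz.
by apply/allP => x; rewrite e.
Qed.

Lemma fjb_spec (R : realType) (z z' : nat -> nat) :
  (first_joint_block R z z' = +oo%E /\ forall j, ~ joint_block z z' j) \/
  exists m, first_joint_block R z z' = (m%:R)%:E /\ joint_block z z' m /\
    forall j, joint_block z z' j -> (m <= j)%N.
Proof.
rewrite /first_joint_block; case: pselect => h.
  right; case: ex_minnP => m hm hmin; exists m; split => //; split => //.
by left; split => // j hj; apply: h; exists j.
Qed.

Section Ana.
Context (R : realType).

Lemma fin_series (u : R ^nat) : cvgn (series u) -> (\sum_(s <oo) (u s)%:E < +oo)%E.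
Proof.
move=> cu.
have -> : (fun n => \sum_(0 <= k < n) (u k)%:E)%E = EFin \o series u.
  by apply/funext => n; rewrite /= sumEFin /series /=.
by rewrite (EFin_lim cu) ltry.
Qed.

Lemma bern (h : R) n : 0 <= h -> 1 + n%:R * h <= (1 + h) ^+ n.
Proof.
move=> h0; elim: n => [|n IH]; first by rewrite mul0r addr0 expr0.
rewrite exprS -natr1.
have hn : 0 <= n%:R * h by apply: mulr_ge0.
nra.
Qed.

Lemma pow_up (h : R) n : 0 <= h <= 1 -> (1 + h) ^+ n <= 1 + ((2 ^ n)%:R - 1) * h.
Proof.
move=> /andP[h0 h1]; elim: n => [|n IH]; first by rewrite expr0 expn0 subrr mul0r addr0.
rewrite exprS expnS natrM.
have a0 : 0 <= (2 ^ n)%:R - 1 :> R by rewrite subr_ge0 ler1n expn_gt0.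
set a := (2 ^ n)%:R - 1 in IH a0 *.
have -> : (2%:R * (2 ^ n)%:R - 1 : R) = 2 * a + 1 by rewrite /a; ring.
have hh : h * h <= h by nra.
have p0 : 0 <= (1 + h) ^+ n by apply: exprn_ge0; lra.
nra.
Qed.

Lemma poly_geom (rho : R) : 0 <= rho < 1 ->
  cvgn (series ((fun s : nat => (s.+1)%:R ^+ 6 * rho ^+ s) : R ^nat)).
Proof.
move=> /andP[r0 r1].
set h := (1 - rho) / 128.
have h0 : 0 < h by rewrite /h divr_gt0 // subr_gt0.
have h1 : h <= 1 by rewrite /h ler_pdivrMr //; lra.
have hd : 63 * h < 1 - rho by rewrite /h; lra.
clearbody h.
have up := @pow_up h 6 (andb_true_intro (conj (ltW h0) h1)).
set th := (1 + h) ^+ 6 * rho.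
have th0 : 0 <= th by rewrite /th mulr_ge0 // exprn_ge0 //; lra.
have th1 : th < 1.
  rewrite /th; have e : (2 ^ 6 = 64)%N by [].
  rewrite e in up.
  nra.
apply: (@series_le_cvg _ _ (geometric ((1 + h) ^+ 6 / h ^+ 6) th)).
- by move=> n; rewrite mulr_ge0 // exprn_ge0.
- move=> n; rewrite /geometric /= mulr_ge0 // ?exprn_ge0 // divr_ge0 // exprn_ge0 //; lra.
- move=> n; rewrite /geometric /= /th exprMn mulrA.
  apply: ler_wpM2r; first exact: exprn_ge0.
  have b := @bern h n.+1 (ltW h0).
  have b2 : (n.+1)%:R * h <= (1 + h) ^+ n.+1 by lra.
  have b3 : ((n.+1)%:R * h) ^+ 6 <= ((1 + h) ^+ n.+1) ^+ 6.
    by apply: lerXn2r; rewrite ?nnegrE ?mulr_ge0 ?exprn_ge0 //; lra.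
  rewrite mulrAC ler_pdivlMr ?exprn_gt0 //.
  rewrite -exprMn (le_trans b3) // -!exprM -exprD.
  by have -> : (6 + 6 * n = n.+1 * 6)%N by lia.
- by apply: is_cvg_geometric_series; rewrite ger0_norm.
Qed.


Lemma weier (I : Type) (s : seq I) (a : I -> R) :
  (forall i, 0 <= a i <= 1) -> 1 - \sum_(i <- s) a i <= \prod_(i <- s) (1 - a i).
Proof.
move=> ha; elim: s => [|x s IH]; first by rewrite !big_nil subr0.
rewrite !big_cons; have /andP[a0 a1] := ha x.
have p0 : 0 <= \prod_(i <- s) (1 - a i).
  by apply: prodr_ge0 => i _; have /andP[] := ha i; lra.
have s0 : 0 <= \sum_(i <- s) a i by apply: sumr_ge0 => i _; have /andP[] := ha i.
nra.
Qed.

Lemma geom_sum (p : R) K : \sum_(0 <= k < K) p ^+ k * (1 - p) = 1 - p ^+ K.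
Proof.
elim: K => [|K IH]; first by rewrite big_geq // expr0 subrr.
by rewrite big_nat_recr //= IH exprS; ring.
Qed.

Lemma pow_small (p eps : R) : 0 <= p < 1 -> 0 < eps -> exists M, p ^+ M < eps.
Proof.
move=> /andP[p0 p1] e0.
have : `|p| < 1 by rewrite ger0_norm.
move=> /cvg_expr /cvgr0Pnorm_lt /(_ eps e0) [N _ hN].
exists N; have := hN N (leqnn N); rewrite /= ger0_norm //; exact: exprn_ge0.
Qed.

Lemma prod_lb (p : R) : 0 <= p < 1 ->
  exists c, 0 < c /\ forall n, c <= \prod_(0 <= m < n) (1 - p ^+ m.+1).
Proof.
move=> /andP[p0 p1].
have fac m : 0 < 1 - p ^+ m.+1 <= 1.
  have : p ^+ m.+1 <= p by rewrite exprS ler_piMr // exprn_ile1 // ltW.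
  have : 0 <= p ^+ m.+1 by apply: exprn_ge0.
  lra.
have [M hM] : exists M, p ^+ M.+1 < (1 - p) / 2.
  have e0 : 0 < (1 - p) / 2 by apply: divr_gt0; lra.
  have [M hM] := @pow_small p ((1 - p) / 2) (andb_true_intro (conj p0 p1)) e0.
  exists M; rewrite exprS; apply: le_lt_trans hM.
  by rewrite ler_piMl // ?exprn_ge0 // ltW.
exists ((\prod_(0 <= m < M) (1 - p ^+ m.+1)) / 2); split.
  by apply: divr_gt0 => //; apply: prodr_gt0 => m _; have /andP[] := fac m.
move=> n.
have dec : \prod_(0 <= m < n + M) (1 - p ^+ m.+1) <= \prod_(0 <= m < n) (1 - p ^+ m.+1).
  rewrite (big_cat_nat (n := n)) ?leq_addr //=.
  apply: ler_piMr; first by apply: prodr_ge0 => m _; have /andP[] := fac m; lra.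
  apply: prodr_ile1 => m _; have /andP[] := fac m; lra.
apply: le_trans dec.
rewrite addnC [X in _ <= X](big_cat_nat (n := M)) ?leq_addr //=.
rewrite ler_pdivrMr // -mulrA -[X in X <= _]mulr1; apply: ler_wpM2l.
  by apply: prodr_ge0 => m _; have /andP[] := fac m; lra.
have w := @weier nat (index_iota M (M + n)) (fun m => p ^+ m.+1)
  (fun m => andb_true_intro (conj (exprn_ge0 _ p0) (exprn_ile1 _ p0 (ltW p1)))).
have gs : \sum_(M <= m < M + n) p ^+ m.+1 <= 1 / 2.
  have e : \sum_(M <= m < M + n) p ^+ m.+1 = p ^+ M.+1 * \sum_(0 <= k < n) p ^+ k.
    rewrite -{1}(add0n M) big_addn addKn mulr_sumr; apply: eq_bigr => k _.
    by rewrite -exprD; congr (_ ^+ _); lia.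
  rewrite e.
  have g := geom_sum p n; rewrite -mulr_suml in g.
  have s0 : 0 <= \sum_(0 <= k < n) p ^+ k by apply: sumr_ge0 => k _; apply: exprn_ge0.
  have pn : 0 <= p ^+ n by apply: exprn_ge0.
  have pM : 0 <= p ^+ M.+1 by apply: exprn_ge0.
  set S := \sum_(0 <= k < n) p ^+ k in g s0 *.
  have h1 : S * (1 - p) <= 1 by lra.
  have h3 : p ^+ M.+1 * 2 < 1 - p by move: hM; rewrite ltr_pdivlMr //.
  have h4 : 0 <= (1 - p - p ^+ M.+1 * 2) * S by apply: mulr_ge0 => //; lra.
  nra.
lra.
Qed.

End Ana.

Section Prob.
Context (R : realType) (p : R) (p0 : 0 <= p) (p1 : p < 1).
Context (d : measure_display) (Omega : measurableType d) (P : probability Omega R).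
Context (X : bool * nat -> Omega -> nat).
Hypothesis hmX : forall i B, measurable (X i @^-1` B).
Hypothesis hprod : forall (F : seq (bool * nat)) (B : bool * nat -> set nat), uniq F ->
  P (\bigcap_(i in [set` F]) (X i @^-1` B i)) = (\prod_(i <- F) P (X i @^-1` B i))%E.
Hypothesis hpt : forall i k, P (X i @^-1` [set k]) = (geom_pmf p k)%:E.

Definition mu (A : set Omega) : R := fine (P A).

Lemma muE A : measurable A -> P A = (mu A)%:E.
Proof.
move=> mA; rewrite /mu fineK // ge0_fin_numE ?measure_ge0 //.
by rewrite (le_lt_trans (probability_le1 P mA)) // ltry.
Qed.

Lemma mu_ge0 A : measurable A -> 0 <= mu A.
Proof. by move=> mA; rewrite -lee_fin -muE. Qed.

Lemma mu_le1 A : measurable A -> mu A <= 1.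
Proof. by move=> mA; rewrite -lee_fin -muE // probability_le1. Qed.

Lemma mu_int i (dd : nat) : mu (X i @^-1` [set z | (1 <= z <= dd)%N]) = 1 - p ^+ dd.
Proof.
elim: dd => [|dd IH].
  rewrite expr0 subrr.
  have -> : X i @^-1` [set z | (1 <= z <= 0)%N] = set0.
    by apply/seteqP; split => w //=; lia.
  by rewrite /mu measure0.
have -> : X i @^-1` [set z | (1 <= z <= dd.+1)%N] =
  X i @^-1` [set z | (1 <= z <= dd)%N] `|` X i @^-1` [set dd.+1].
  by apply/seteqP; split => w /=; [move=> h; lia| case=> h; lia].
have e : P (X i @^-1` [set z | (1 <= z <= dd)%N] `|` X i @^-1` [set dd.+1]) =
   (P (X i @^-1` [set z | (1 <= z <= dd)%N]) + P (X i @^-1` [set dd.+1]))%E.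
  apply: measureU => //; by apply/seteqP; split => w //= [h1 h2]; lia.
rewrite /mu e hpt (muE _ (hmX _ _)) IH /=.
by rewrite exprS; ring.
Qed.

Lemma mu_out i (dd : nat) : mu (X i @^-1` [set z | ~ (1 <= z <= dd)%N]) = p ^+ dd.
Proof.
have -> : X i @^-1` [set z | ~ (1 <= z <= dd)%N] = ~` (X i @^-1` [set z | (1 <= z <= dd)%N]).
  by apply/seteqP; split => w.
rewrite /mu probability_setC // (muE _ (hmX _ _)) mu_int /=.
by ring.
Qed.


Definition Rect (B : bool * nat -> set nat) (F : seq (bool * nat)) : set Omega :=
  \bigcap_(x in [set` F]) (X x @^-1` B x).

Lemma Rect_nil B : Rect B [::] = setT.
Proof. by apply/seteqP; split => w //= _ x. Qed.

Lemma Rect_cat B F1 F2 : Rect B (F1 ++ F2) = Rect B F1 `&` Rect B F2.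
Proof.
apply/seteqP; split => w /=.
  by move=> h; split => x hx; apply: h; rewrite /= mem_cat hx ?orbT.
by move=> [h1 h2] x /=; rewrite mem_cat => /orP[] hx; [apply: h1|apply: h2].
Qed.

Lemma Rect1 B x : Rect B [:: x] = X x @^-1` B x.
Proof.
apply/seteqP; split => w /=.
  by move=> h; apply: h; rewrite /= mem_seq1.
by move=> h y /=; rewrite mem_seq1 => /eqP ->.
Qed.

Lemma Rect_meas B F : measurable (Rect B F).
Proof.
elim: F => [|x F IH]; first by rewrite Rect_nil.
by rewrite -cat1s Rect_cat Rect1; apply: measurableI.
Qed.

Lemma mu_Rect B F : uniq F -> mu (Rect B F) = \prod_(x <- F) mu (X x @^-1` B x).
Proof.
move=> uF; rewrite /mu /Rect hprod //.
rewrite (eq_bigr (fun x => (mu (X x @^-1` B x))%:E)); last by move=> x _; exact: muE.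
by rewrite prodEFin.
Qed.

Lemma muD A B : measurable A -> measurable B -> mu (A `\` B) = mu A - mu (A `&` B).
Proof.
move=> mA mB.
have e : P (A `\` B) = (P A - P (A `&` B))%E.
  by apply: measureD => //; rewrite (le_lt_trans (probability_le1 P mA)) // ltry.
by rewrite /mu e (muE _ mA) (muE _ (measurableI _ _ mA mB)).
Qed.

Definition Bs (s : nat) (x : bool * nat) : set nat :=
  [set z | (1 <= z <= (x.2 %/ s).+1 * s - x.2)%N].
Definition Fk (s k : nat) : seq (bool * nat) :=
  [seq (false, i) | i <- iota (k * s) s] ++ [seq (true, i) | i <- iota (k * s) s].
Definition G s k := Rect (Bs s) (Fk s k).
Definition V s m := [set w | forall k, (k < m)%N -> ~ G s k w].

Lemma memFk s k b i : ((b, i) \in Fk s k) = (i \in iota (k * s) s).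
Proof.
rewrite mem_cat; apply/orP/idP.
  by case => /mapP [j hj [_ ->]].
by move=> h; case: b; [right|left]; apply/mapP; exists i.
Qed.

Lemma uniqFk s k : uniq (Fk s k).
Proof.
rewrite cat_uniq !map_inj_uniq ?iota_uniq //=; last 2 first.
- by move=> a b [].
- by move=> a b [].
rewrite andbT; apply/hasPn => x /mapP[i _ ->]; by apply/mapP => -[j _ []].
Qed.

Lemma V_meas s m : measurable (V s m).
Proof.
elim: m => [|m IH].
  by have -> : V s 0 = setT by apply/seteqP; split => w //= _ k.
have -> : V s m.+1 = V s m `&` ~` G s m.
  apply/seteqP; split => w /=.
    by move=> h; split; [move=> k km; apply: h; lia| apply: h].
  move=> [h1 h2] k; rewrite ltnS leq_eqVlt => /orP[/eqP -> //|]; exact: h1.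
by apply: measurableI => //; apply: measurableC; exact: Rect_meas.
Qed.

Lemma indep s m F : uniq F -> (forall x, x \in F -> (m * s <= x.2)%N) ->
  mu (V s m `&` Rect (Bs s) F) =
  (\prod_(k < m) (1 - mu (G s k))) * mu (Rect (Bs s) F).
Proof.
elim: m F => [|m IH] F uF hF.
  rewrite big_ord0 mul1r; congr mu; apply/seteqP; split => w /=; first by case.
  by move=> h; split.
have e : V s m.+1 `&` Rect (Bs s) F = (V s m `&` Rect (Bs s) F) `\` G s m.
  apply/seteqP; split => w /=.
    move=> [h1 h2]; split; last exact: h1.
    by split => // k km; apply: h1; lia.
  move=> [[h1 h2] h3]; split => // k; rewrite ltnS leq_eqVlt => /orP[/eqP -> //|].
  exact: h1.
have mR := Rect_meas (Bs s) F.
rewrite e muD; last 2 first.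
- exact: measurableI (V_meas s m) mR.
- exact: Rect_meas.
have e2 : (V s m `&` Rect (Bs s) F) `&` G s m = V s m `&` Rect (Bs s) (Fk s m ++ F).
  by rewrite Rect_cat /G setIAC -setIA [X in _ `&` X]setIC.
have hF' : forall x, x \in F -> (m * s <= x.2)%N.
  by move=> x /hF; rewrite mulSn; lia.
have uc : uniq (Fk s m ++ F).
  rewrite cat_uniq uniqFk uF andbT; apply/hasPn => -[b i] /hF /= h.
  rewrite memFk mem_iota; lia.
have hc : forall x, x \in Fk s m ++ F -> (m * s <= x.2)%N.
  move=> [b i]; rewrite mem_cat memFk mem_iota => /orP[/andP[]//|/hF'] //.
rewrite e2 IH // IH // (mu_Rect _ _ uc) big_cat -(mu_Rect _ _ (uniqFk s m)) -(mu_Rect _ _ uF).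
rewrite big_ord_recr /=; rewrite -/(G s m); ring.
Qed.


Lemma block_prod s k : (0 < s)%N ->
  \prod_(i <- iota (k * s) s) (1 - p ^+ ((i %/ s).+1 * s - i)) =
  \prod_(0 <= m < s) (1 - p ^+ m.+1).
Proof.
move=> s0; rewrite -[(k * s)%N]addn0 iotaDl big_map.
rewrite (_ : iota 0 s = index_iota 0 s); last by rewrite /index_iota subn0.
rewrite big_nat_rev /= add0n; apply: eq_big_nat => i /andP[_ hi].
rewrite (divnMDl _ _ s0) divn_small; last lia.
congr (1 - p ^+ _); lia.
Qed.

Lemma muG s k : (0 < s)%N -> mu (G s k) = (\prod_(0 <= m < s) (1 - p ^+ m.+1)) ^+ 2.
Proof.
move=> s0; rewrite /G (mu_Rect _ _ (uniqFk s k)) /Fk big_cat !big_map /=.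
rewrite /Bs /=; under eq_bigr do rewrite mu_int.
under [X in _ * X]eq_bigr do rewrite mu_int.
by rewrite block_prod // expr2.
Qed.


Lemma union_bound (F : seq (bool * nat)) (S : bool * nat -> set nat) :
  measurable [set w | exists x, x \in F /\ S x (X x w)] /\
  mu [set w | exists x, x \in F /\ S x (X x w)] <= \sum_(x <- F) mu (X x @^-1` S x).
Proof.
elim: F => [|x F [IHm IHb]].
  have -> : [set w | exists x, x \in [::] /\ S x (X x w)] = set0.
    by apply/seteqP; split => w //= [y []].
  by rewrite /mu measure0 big_nil.
have -> : [set w | exists y, y \in x :: F /\ S y (X y w)] =
  X x @^-1` S x `|` [set w | exists y, y \in F /\ S y (X y w)].
  apply/seteqP; split => w /=.
    move=> [y []]; rewrite in_cons => /orP[/eqP -> h|h1 h2]; first by left.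
    by right; exists y.
  case=> [h|[y [h1 h2]]]; first by exists x; rewrite mem_head.
  by exists y; rewrite in_cons h1 orbT.
split; first by apply: measurableU.
rewrite big_cons.
have e : (P (X x @^-1` S x `|` [set w | exists y, y \in F /\ S y (X y w)]) <=
   P (X x @^-1` S x) + P [set w | exists y, y \in F /\ S y (X y w)])%E.
  exact: measureU2.
rewrite (muE _ (measurableU _ _ (hmX _ _) IHm)) (muE _ (hmX _ _)) (muE _ IHm) in e.
by rewrite lee_fin in e; lra.
Qed.

Definition Fall s : seq (bool * nat) :=
  [seq (false, i) | i <- iota 0 (s * s)] ++ [seq (true, i) | i <- iota 0 (s * s)].
Definition U s := [set w | exists x, x \in Fall s /\ [set z | ~ (1 <= z <= s)%N] (X x w)].

Lemma U_meas s : measurable (U s).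
Proof. exact: (union_bound (Fall s) (fun _ => [set z | ~ (1 <= z <= s)%N])).1. Qed.

Lemma muU s : mu (U s) <= 2 * (s * s)%:R * p ^+ s.
Proof.
have [_ h] := union_bound (Fall s) (fun _ => [set z | ~ (1 <= z <= s)%N]).
apply: (le_trans h); rewrite /Fall big_cat !big_map /=.
under eq_bigr do rewrite mu_out.
under [X in _ + X]eq_bigr do rewrite mu_out.
rewrite (_ : iota 0 (s * s) = index_iota 0 (s * s)); last by rewrite /index_iota subn0.
rewrite !sumr_const_nat subn0 -mulr_natl.
by rewrite natrM le_eqVlt; apply/orP; left; apply/eqP; ring.
Qed.

Lemma muV s c : 0 < c -> (forall n, c <= \prod_(0 <= m < n) (1 - p ^+ m.+1)) ->
  mu (V s s) <= (1 - c ^+ 2) ^+ s.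
Proof.
move=> c0 hc.
have := @indep s s [::] erefl (fun x (h : x \in [::]) => False_ind _ (notF h)).
rewrite Rect_nil setIT /mu probability_setT /= mulr1 => ->.
have -> : (1 - c ^+ 2) ^+ s = \prod_(k < s) (1 - c ^+ 2) by rewrite prodr_const card_ord.
apply: ler_prod => k _.
have s0 : (0 < s)%N by case: k => /= k ks; lia.
have mG := Rect_meas (Bs s) (Fk s k).
have h1 := mu_le1 _ mG.
rewrite -/(G s k) in h1; change (fine (P (G s k))) with (mu (G s k)); rewrite muG // in h1 *.
have hq := hc s.
set Q := \prod_(0 <= m < s) (1 - p ^+ m.+1) in hq h1 *.
have cQ : 0 <= Q by apply: le_trans hq; exact: ltW.
have : c ^+ 2 <= Q ^+ 2 by rewrite !expr2; nra.

lra.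
Qed.


Lemma claim s w : ~ U s w -> ~ V s s w ->
  exists j, (0 < j <= s * s)%N /\
    joint_block (fun i => X (false, i) w) (fun i => X (true, i) w) j.
Proof.
move=> nU nV.
have [k [ks Gk]] : exists k, (k < s)%N /\ G s k w.
  case: (pselect (exists k, (k < s)%N /\ G s k w)) => // h; exfalso.
  by apply: nV => k ks Gk; apply: h; exists k.
have s0 : (0 < s)%N by lia.
have hb b : forall i, (i < k.+1 * s)%N -> (1 <= X (b, i) w <= k.+1 * s - i)%N.
  move=> i hi.
  case: (leqP (k * s) i) => hki.
    have hm : (b, i) \in Fk s k by rewrite memFk mem_iota; rewrite mulSn in hi; lia.
    have := Gk (b, i) hm; rewrite /Bs /=.
    have -> : (i %/ s = k)%N.
      rewrite -(subnKC hki) (divnMDl _ _ s0) divn_small //; rewrite mulSn in hi; lia.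
    by [].
  have hm : (b, i) \in Fall s.
    rewrite /Fall mem_cat; case: b; apply/orP; [right|left]; apply/mapP; exists i => //;
    rewrite mem_iota; nia.
  case: (boolP (1 <= X (b, i) w <= s)%N) => h.
    rewrite mulSn; lia.
  by exfalso; apply: nU; exists (b, i); split => //; apply/negP.
exists (k.+1 * s)%N; split; first by apply/andP; split; nia.
apply/and3P; split; first by nia.
- by apply: SC => i hi; exact: hb.
- by apply: SC => i hi; exact: hb.
Qed.

End Prob.

Theorem lemma4p3 (R : realType) (q : R) (hq : 1 < q)
  (d : measure_display) (Omega : measurableType d) (P : probability Omega R)
  (Z Z' : nat -> Omega -> nat)
  (hind : mutually_independent P (join_family Z Z'))
  (hZ : forall i k, P (Z i @^-1` [set k]) = (geom_pmf q^-1 k)%:E)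
  (hZ' : forall i k, P (Z' i @^-1` [set k]) = (geom_pmf q^-1 k)%:E) :
  let T1 := fun w => first_joint_block R (fun i => Z i w) (fun i => Z' i w) in
  (\int[P]_w (T1 w * T1 w) < +oo)%E.
Proof.
pose T1 := fun w => first_joint_block R (fun i => Z i w) (fun i => Z' i w).
change (\int[P]_w (T1 w * T1 w) < +oo)%E.
set p := q^-1.
have q0 : 0 < q by apply: lt_trans hq.
have p0 : 0 <= p by rewrite invr_ge0 ltW.
have p1 : p < 1 by rewrite invf_lt1.
pose X := join_family Z Z'.
have hmX : forall i B, measurable (X i @^-1` B) := hind.1.
have hprod : forall (F : seq (bool * nat)) (B : bool * nat -> set nat), uniq F ->
  P (\bigcap_(i in [set` F]) (X i @^-1` B i)) = (\prod_(i <- F) P (X i @^-1` B i))%E.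
  exact: hind.2.
have hpt : forall i k, P (X i @^-1` [set k]) = (geom_pmf p k)%:E.
  by move=> [[] i] k; [exact: hZ' | exact: hZ].
have [c [c0 hc]] := @prod_lb R p (andb_true_intro (conj p0 p1)).
set r := 1 - c ^+ 2.
have c1 : c <= 1 by have := hc 0%N; rewrite big_geq.
have r0 : 0 <= r by rewrite /r expr2; nra.
have r1 : r < 1 by rewrite /r expr2; nra.
pose A s := U d Omega X s `|` V d Omega X s s.
have mU s := @U_meas R d Omega P X hmX s.
have mV s := @V_meas R p p0 p1 d Omega X hmX s s.
have mA s : measurable (A s) by apply: measurableU.
pose b (s : nat) := 2 * (s * s)%:R * p ^+ s + r ^+ s.
have hA s : (P (A s) <= (b s)%:E)%E.
  have e : (P (A s) <= P (U d Omega X s) + P (V d Omega X s s))%E.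
    by apply: measureU2.
  apply: le_trans e _.
  rewrite (@muE R d Omega P _ (mU s)) (@muE R d Omega P _ (mV s)) -EFinD lee_fin.
  apply: lerD; first exact: (@muU R p p0 p1 d Omega P X hmX hpt s).
  exact: (@muV R p p0 p1 d Omega P X hmX hprod hpt s c c0 hc).
pose cs (s : nat) : R := ((s.+1) ^ 4)%:R.
pose f (s : nat) (w : Omega) : \bar R := (cs s * \1_(A s) w)%:E.
have f0 s w : (0 <= f s w)%E by rewrite lee_fin mulr_ge0 // ?indic_ge0.
have hnA w s : ~ A s w ->
    exists j, (0 < j <= s * s)%N /\ joint_block (fun i => Z i w) (fun i => Z' i w) j.
  move=> nA; apply: (@claim R p p0 p1 d Omega X s w) => h; apply: nA; [left|right]; exact: h.
have fA s w : A s w -> f s w = (cs s)%:E by move=> h; rewrite /f indicE mem_set // mulr1.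
have key w : (T1 w * T1 w <= \sum_(s <oo) f s w)%E.
  rewrite /T1; case: (fjb_spec R (fun i => Z i w) (fun i => Z' i w)) => [[-> hno]|[m [-> [hm hmin]]]].
    have allA s : A s w.
      apply: contrapT => nA; have [j [_ hj]] := hnA w s nA; exact: hno j hj.
    suff -> : (\sum_(s <oo) f s w = +oo)%E by rewrite mulyy.
    apply/eqyP => a a0.
    set n := (Num.Def.truncn a).+1.
    apply: le_trans (nneseries_lim_ge n (fun s _ _ => f0 s w)).
    rewrite (eq_bigr (fun s => (cs s)%:E)); last by move=> s _; exact: fA.
    rewrite sumEFin lee_fin.
    apply: le_trans (ltW (truncnS_gt a)) _.
    rewrite -/n.
    have : \sum_(0 <= i < n) (1 : R) <= \sum_(0 <= i < n) cs i.
      by apply: ler_sum => i _; rewrite /cs ler1n expn_gt0.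
    by rewrite sumr_const_nat subn0.
  have m0 : (0 < m)%N by case/and3P: hm.
  have ex : exists s, (m <= s * s)%N by exists m; nia.
  have [ss hss hmin2] := ex_minnP ex.
  have ss0 : (0 < ss)%N by case: ss hss hmin2 => //=; lia.
  have hs0 : (ss.-1 * ss.-1 < m)%N.
    rewrite ltnNge; apply/negP => h; have := hmin2 _ h; lia.
  have As0 : A ss.-1 w.
    apply: contrapT => nA; have [j [/andP[_ hj] hjb]] := hnA w _ nA.
    have := hmin j hjb; lia.
  apply: le_trans (nneseries_lim_ge ss (fun s _ _ => f0 s w)).
  rewrite -(prednK ss0) big_nat_recr //= (fA _ _ As0).
  apply: le_trans (leeDr _ _) ; last first.
    by apply: sume_ge0 => i _; exact: f0.
  rewrite -EFinM lee_fin /cs (prednK ss0) -natrM ler_nat.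
  have : (m * m <= (ss * ss) * (ss * ss))%N by apply: leq_mul.
  by rewrite (_ : (ss ^ 4 = ss * ss * (ss * ss))%N) //; rewrite !expnS expn0; lia.
have T0 w : (0 <= T1 w * T1 w)%E.
  rewrite /T1; case: (fjb_spec R (fun i => Z i w) (fun i => Z' i w)) => [[-> _]|[m [-> _]]].
    by rewrite mulyy.
  by rewrite -EFinM lee_fin mulr_ge0.
have mf s : measurable_fun [set: Omega] (f s).
  apply/measurable_EFinP; apply: measurable_funM => //; exact: measurable_indic.
have I1 : (\int[P]_w (T1 w * T1 w) <= \int[P]_w (\sum_(s <oo) f s w))%E.
  rewrite !ge0_integralTE //; last first.
    by move=> w; apply: nneseries_ge0 => n _ _; exact: f0.
  apply: le_ereal_sup => _ [h hh <-]; exists h => //= w.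
  exact: le_trans (hh w) (key w).
rewrite (@integral_nneseries _ _ _ P setT measurableT f mf (fun n w _ => f0 n w)) in I1.
have If s : (\int[P]_w f s w = (cs s)%:E * P (A s))%E.
  rewrite /f; under eq_integral do rewrite EFinM.
  rewrite ge0_integralZl_EFin //.
    by rewrite integral_indic // setIT.
  by apply/measurable_EFinP; exact: measurable_indic.
have hcvg : cvgn (series ((fun s => cs s * b s) : R ^nat)).
  have c1' := @poly_geom R p (andb_true_intro (conj p0 p1)).
  have c2' := @poly_geom R r (andb_true_intro (conj r0 r1)).
  have c3 := is_cvg_seriesD (is_cvg_seriesZ (k:=2) c1') c2'.
  have b0 s : 0 <= b s.
    by rewrite /b addr_ge0 ?mulr_ge0 ?exprn_ge0.
  apply: (series_le_cvg _ _ _ c3).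
  - by move=> s; rewrite mulr_ge0 // /cs ler0n.
  - by move=> s; rewrite !fctE addr_ge0 ?scaler_ge0 ?mulr_ge0 ?exprn_ge0.
  - move=> s; rewrite !fctE /cs /b.
    set t : R := (s.+1)%:R.
    have t1 : 1 <= t by rewrite /t ler1n.
    have e4 : ((s.+1 ^ 4)%:R : R) = t ^+ 4 by rewrite natrX.
    have ss : ((s * s)%:R : R) <= t ^+ 2.
      by rewrite expr2 -natrM ler_nat; apply: leq_mul.
    rewrite e4 /GRing.scale /=.
    have P0 : 0 <= p ^+ s by apply: exprn_ge0.
    have Q0 : 0 <= r ^+ s by apply: exprn_ge0.
    have s0 : 0 <= ((s * s)%:R : R) by apply: ler0n.
    have t4 : 0 <= t ^+ 4 by apply: exprn_ge0; lra.
    have h1 : t ^+ 4 * ((s * s)%:R * p ^+ s) <= t ^+ 4 * (t ^+ 2 * p ^+ s).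
      by apply: ler_wpM2l => //; apply: ler_wpM2r.
    have h2 : t ^+ 4 <= t ^+ 6.
      by rewrite (_ : 6 = 4 + 2)%N // exprD ler_peMr // ?exprn_ge1 //; lra.
    have h3 : t ^+ 4 * r ^+ s <= t ^+ 6 * r ^+ s by apply: ler_wpM2r.
    have e6 : t ^+ 6 = t ^+ 4 * t ^+ 2 by rewrite -exprD.
    rewrite e6 in h3 *.
    nra.
apply: le_lt_trans I1 _.
apply: le_lt_trans (@fin_series R (fun s => cs s * b s) hcvg).
apply: lee_nneseries.
  by move=> i _ _; apply: integral_ge0 => w _; exact: f0.
move=> s _; rewrite If EFinM.
apply: lee_wpmul2l; first by rewrite lee_fin /cs ler0n.
exact: hA.
Qed.
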